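(* $C_3(82) = 7$.
   Context: For positive integers $m, r$, $C_m(r)$ is the minimum odd positive integer $n$ such that there exist vectors $v_1, \ldots, v_n \in \mathbb{Z}^m$ (not necessarily distinct) with $|v_i| = \sqrt{r}$ (Euclidean norm) for every $i$ and $v_1 + \cdots + v_n = \mathbf{0}$; if no such odd $n$ exists, $C_m(r) = 0$. *)

(* Defs.v *)
From mathcomp Require Import all_boot all_order all_algebra.
From Stdlib Require Import ClassicalEpsilon.
Set Implicit Arguments. Unset Strict Implicit. Unset Printing Implicit Defensive.
Import GRing.Theory Num.Theory.
Local Open Scope ring_scope.

Definition sqnorm (m : nat) (v : 'rV[int]_m) : int := \sum_(i < m) v 0 i ^+ 2.

Definition balanced (m r n : nat) : Prop :=
  exists v : 'I_n -> 'rV[int]_m,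
    (forall i, sqnorm (v i) = r%:Z) /\ \sum_(i < n) v i = 0.

Definition oddbal (m r n : nat) : Prop := odd n /\ balanced m r n.

Definition oddbalb (m r : nat) (n : nat) : bool :=
  if excluded_middle_informative (oddbal m r n) then true else false.

Definition C (m r : nat) : nat :=
  match excluded_middle_informative (exists n, oddbalb m r n) with
  | left h => ex_minn h
  | right _ => 0%N
  end.

(* Main.v *)
Require Import Defs.
From mathcomp Require Import all_boot all_order all_algebra.
From mathcomp Require Import zify ssrZ.
From Stdlib Require Import ZArith Lia List ClassicalEpsilon MSetAVL OrdersEx.
Module ZS := MSetAVL.Make(Z_as_OT).
Import GRing.Theory Num.Theory.

Definition box : list Z := List.map (fun n => Z.of_nat n - 9)%Z (List.seq 0 19).
Definition nZ (t : Z * Z * Z) : Z := let '(a, b, c) := t in (a*a + b*b + c*c)%Z.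
Definition add3 (s t : Z * Z * Z) : Z * Z * Z :=
  let '(a, b, c) := s in let '(a', b', c') := t in (a + a', b + b', c + c')%Z.
Definition L : list (Z * Z * Z) :=
  List.filter (fun t => Z.eqb (nZ t) 82) (list_prod (list_prod box box) box).

Definition kf (t : Z * Z * Z) : Z := let '(a, b, c) := t in (a + 91 * b + 8281 * c)%Z.
Definition T : list Z := List.map kf L.
Definition inner (a : Z) (s : ZS.t) : ZS.t :=
  fold_left (fun s b => ZS.add (a + b)%Z s) T s.
Definition S2 : ZS.t := fold_left (fun s a => inner a s) T ZS.empty.

Definition check5 : bool :=
  forallb (fun a => forallb (fun b => forallb (fun c =>
    negb (ZS.mem (- (a + b + c))%Z S2)) T) T) T.
Definition check3 : bool := forallb (fun a => negb (ZS.mem (- a)%Z S2)) T.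

Lemma check5_ok : check5 = true. Proof. vm_compute. reflexivity. Qed.
Lemma check3_ok : check3 = true. Proof. vm_compute. reflexivity. Qed.

Lemma fold_mono {A : Type} (f : ZS.t -> A -> ZS.t) (l : list A) s x :
  (forall s y, ZS.In x s -> ZS.In x (f s y)) -> ZS.In x s -> ZS.In x (fold_left f l s).
Proof.
move=> Hf; elim: l s => [|y l IH] s Hs //=.
by apply: IH; apply: Hf.
Qed.

Lemma fold_in {A : Type} (f : ZS.t -> A -> ZS.t) (l : list A) s x y :
  List.In y l -> (forall s, ZS.In x (f s y)) ->
  (forall s y, ZS.In x s -> ZS.In x (f s y)) -> ZS.In x (fold_left f l s).
Proof.
move=> Hy Hfy Hf; elim: l s Hy => [|z l IH] s //= [Ezy|Hl].
  by subst z; apply: fold_mono => //.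
by apply: IH.
Qed.

Lemma inner_mono a s x : ZS.In x s -> ZS.In x (inner a s).
Proof.
apply: fold_mono => s' y H; apply ZS.add_spec; by right.
Qed.

Lemma S2_in {a b} : List.In a T -> List.In b T -> ZS.mem (a + b)%Z S2 = true.
Proof.
move=> Ha Hb; apply ZS.mem_spec; rewrite /S2.
apply: (@fold_in _ _ _ _ _ a) => //.
- move=> s; rewrite /inner; apply: (@fold_in _ _ _ _ _ b) => //.
  + by move=> s'; apply ZS.add_spec; left.
  + by move=> s' y H; apply ZS.add_spec; right.
- by move=> s y H; apply: inner_mono.
Qed.

Lemma kf_add s t : kf (add3 s t) = (kf s + kf t)%Z.
Proof. case: s => [[a1 a2] a3]; case: t => [[b1 b2] b3]; rewrite /kf /add3; ring. Qed.

Lemma in_box (a : Z) : (-9 <= a <= 9)%Z -> List.In a box.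
Proof.
move=> Ha; apply List.in_map_iff; exists (Z.to_nat (a + 9)); split; first lia.
apply List.in_seq; lia.
Qed.

Lemma inL (t : Z * Z * Z) : nZ t = 82%Z -> List.In t L.
Proof.
case: t => [[a b] c] H.
rewrite /L; apply (proj2 (List.filter_In _ _ _)); split; last by rewrite H.
move: H; rewrite /nZ => H.
apply List.in_prod; [apply List.in_prod|]; apply: in_box; nia.
Qed.

Lemma inT t : nZ t = 82%Z -> List.In (kf t) T.
Proof. by move=> /inL H; apply List.in_map. Qed.

Lemma key5 {a b c d e : Z * Z * Z} : nZ a = 82%Z -> nZ b = 82%Z -> nZ c = 82%Z ->
  nZ d = 82%Z -> nZ e = 82%Z -> add3 a (add3 b (add3 c (add3 d e))) = (0, 0, 0)%Z -> False.
Proof.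
move=> /inT Ha /inT Hb /inT Hc /inT Hd /inT He Hs.
have := congr1 kf Hs; rewrite !kf_add /= => Hk.
have := S2_in Hd He.
have -> : (kf d + kf e = - (kf a + kf b + kf c))%Z by lia.
have := check5_ok; rewrite /check5.
move/forallb_forall/(_ _ Ha)/forallb_forall/(_ _ Hb)/forallb_forall/(_ _ Hc).
by case: (ZS.mem _ _).
Qed.

Lemma key3 {a b e : Z * Z * Z} : nZ a = 82%Z -> nZ b = 82%Z ->
  nZ e = 82%Z -> add3 a (add3 b e) = (0, 0, 0)%Z -> False.
Proof.
move=> /inT Ha /inT Hb /inT He Hs.
have := congr1 kf Hs; rewrite !kf_add /= => Hk.
have := S2_in Hb He.
have -> : (kf b + kf e = - kf a)%Z by lia.
have := check3_ok; rewrite /check3.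
move/forallb_forall/(_ _ Ha).
by case: (ZS.mem _ _).
Qed.

Definition zt (r : 'rV[int]_3) : Z * Z * Z :=
  (Z_of_int (r 0%R ord0), Z_of_int (r 0%R (lift ord0 ord0)),
   Z_of_int (r 0%R (lift ord0 (lift ord0 ord0)))).

Lemma zt_norm {r : 'rV[int]_3} : sqnorm r = Posz 82 -> nZ (zt r) = 82%Z.
Proof.
rewrite /sqnorm !big_ord_recl big_ord0 /= => H.
have := congr1 Z_of_int H.
rewrite !expr2.
rewrite /nZ /zt.
lia.
Qed.

Section S.
Local Open Scope ring_scope.
Lemma coords n (v : 'I_n -> 'rV[int]_3) : \sum_(i < n) v i = 0%R ->
  forall j, (\sum_(i < n) v i 0%R j = 0)%R.
Proof.
move=> Hs j; have := congr1 (fun M : 'rV[int]_3 => M 0%R j) Hs.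
by rewrite summxE mxE.
Qed.

Lemma sumI n (F : 'I_n.+1 -> int) :
  \sum_(i < n.+1) F i = \sum_(k <- iota 0 n.+1) F (inord k).
Proof.
rewrite [RHS](_ : _ = \sum_(0 <= k < n.+1) F (inord k)) // big_mkord.
by apply: eq_bigr => i _; rewrite inord_val.
Qed.

Lemma no5 : ~ balanced 3%N 82%N 5%N.
Proof.
case=> v [Hn /coords Hc].
apply: (key5 (zt_norm (Hn (@inord 4 0))) (zt_norm (Hn (@inord 4 1)))
  (zt_norm (Hn (@inord 4 2)))
  (zt_norm (Hn (@inord 4 3)))
  (zt_norm (Hn (@inord 4 4)))).
have H0 := Hc ord0; have H1 := Hc (lift ord0 ord0);
have H2 := Hc (lift ord0 (lift ord0 ord0)).
rewrite sumI /= !big_cons big_nil in H0.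
rewrite sumI /= !big_cons big_nil in H1.
rewrite sumI /= !big_cons big_nil in H2.
rewrite /add3 /zt; congr (_, _, _); lia.
Qed.

Lemma no3 : ~ balanced 3%N 82%N 3%N.
Proof.
case=> v [Hn /coords Hc].
apply: (key3 (zt_norm (Hn (@inord 2 0))) (zt_norm (Hn (@inord 2 1)))
  (zt_norm (Hn (@inord 2 2)))).
have H0 := Hc ord0; have H1 := Hc (lift ord0 ord0);
have H2 := Hc (lift ord0 (lift ord0 ord0)).
rewrite sumI /= !big_cons big_nil in H0.
rewrite sumI /= !big_cons big_nil in H1.
rewrite sumI /= !big_cons big_nil in H2.
rewrite /add3 /zt; congr (_, _, _); lia.
Qed.

Lemma no1 : ~ balanced 3%N 82%N 1%N.
Proof.
case=> v [Hn /coords Hc].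
have := zt_norm (Hn (@inord 0 0)).
have H0 := Hc ord0; have H1 := Hc (lift ord0 ord0);
have H2 := Hc (lift ord0 (lift ord0 ord0)).
rewrite sumI /= !big_cons big_nil in H0.
rewrite sumI /= !big_cons big_nil in H1.
rewrite sumI /= !big_cons big_nil in H2.
rewrite /nZ /zt; lia.
Qed.

Definition data : list (list int) :=
  [:: [:: Negz 8; Negz 0; Posz 0]; [:: Negz 8; Negz 0; Posz 0];
      [:: Negz 8; Posz 1; Posz 0]; [:: Posz 3; Negz 7; Negz 2];
      [:: Posz 8; Posz 3; Negz 2]; [:: Posz 8; Posz 3; Posz 3];
      [:: Posz 8; Posz 3; Posz 3]].

Definition w (i : 'I_7) : 'rV[int]_3 := \row_(j < 3) seq.nth 0%R (seq.nth [::] data i) j.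

Lemma yes7 : balanced 3%N 82%N 7%N.
Proof.
exists w; split.
  move=> i; case: i => [[|[|[|[|[|[|[|//]]]]]]] Hi];
  rewrite /sqnorm !big_ord_recl big_ord0 !mxE /=; reflexivity.
apply/matrixP => a j; rewrite summxE !big_ord_recl big_ord0 !mxE.
case: j => [[|[|[|//]]] Hj] /=; reflexivity.
Qed.

End S.

Theorem theorem5 : C 3 82 = 7%N.
Proof.
have P7 : oddbalb 3 82 7.
  rewrite /oddbalb; case: excluded_middle_informative => // [[]].
  by split; [|exact: yes7].
rewrite /C; case: excluded_middle_informative => [h|[]]; last by exists 7%N.
case: ex_minnP => m Hm Hmin.
have Hle := Hmin 7%N P7.
move: Hm; rewrite /oddbalb; case: excluded_middle_informative => // [[Hodd Hbal]] _.
clear Hmin; case: m Hodd Hbal Hle => [|[|[|[|[|[|[|[|m]]]]]]]] //= _ Hb _.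
- by case: (no1 Hb).
- by case: (no3 Hb).
- by case: (no5 Hb).
Qed.
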